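(* Let $G$ be a finite simple connected graph and $w$ a non-negative real function on the edges of $G$. Let $d_s$ be the shortest-path distance on the vertices of $G$, and define $\pi(u,u)=0$ and, for distinct vertices $u,v$, \[\pi(u,v) = \min\left\{ \frac{p(\gamma)}{p(\gamma)+1} : \gamma \text{ is a shortest path between } u \text{ and } v\right\},\] where $p(\gamma) = \prod_{e \in \gamma} w(e)$. Then $d^{\pi}_w := d_s + \pi$ is a metric on the vertex set of $G$ that refines $d_s$.
   Context: Metrics on a vertex set $V$ are regarded as functions on $V \times V$. For functions $f,f'\colon V\times V \to \mathbb{R}$, $f'$ refines $f$ if for all pairs $(x_1,x_2),(x_1',x_2') \in V\times V$ that agree in at least one coordinate, $f(x_1,x_2) < f(x_1',x_2')$ implies $f'(x_1,x_2) < f'(x_1',x_2')$. *)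

(* Defs.v *)
From HB Require Import structures.
From mathcomp Require Import all_boot all_order all_algebra.
From mathcomp Require Import reals.
Set Implicit Arguments. Unset Strict Implicit. Unset Printing Implicit Defensive.
Import Order.TTheory GRing.Theory Num.Theory.
Local Open Scope ring_scope.

(* A finite simple graph: vertex type V : finType, edge relation e : rel V,
   symmetric and irreflexive.  Edges are the 2-sets [set u; v] with e u v. *)
Definition simple_graph (V : finType) (e : rel V) : Prop :=
  symmetric e /\ irreflexive e.

Definition connected_graph (V : finType) (e : rel V) : Prop :=
  forall u v : V, connect e u v.

(* A walk from u to v: the sequence of vertices after u. *)
Definition walkb (V : finType) (e : rel V) (u v : V) (p : seq V) : bool :=
  path e u p && (last u p == v).

(* Shortest-path distance: least n such that a walk with n edges from u to v
   exists.  In a connected graph such n is < #|V|, so searching [0, #|V|)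
   suffices. *)
Definition dist_s (V : finType) (e : rel V) (u v : V) : nat :=
  find (fun n => [exists p : n.-tuple V, walkb e u v p]) (iota 0 #|V|).

Definition pathprod (R : realType) (V : finType) (w : {set V} -> R)
    (u : V) (p : seq V) : R :=
  \prod_(ab <- zip (u :: p) p) w [set ab.1; ab.2].

(* Since w >= 0 every value p/(p+1) lies in [0,1), so using 1 as the neutral
   element of the iterated minimum does not change the (nonempty) minimum. *)
Definition pi_w (R : realType) (V : finType) (e : rel V) (w : {set V} -> R)
    (u v : V) : R :=
  if u == v then 0 else
  \big[Num.min/1]_(p : (dist_s e u v).-tuple V | walkb e u v p)
     (pathprod w u p / (pathprod w u p + 1)).

Definition d_pi (R : realType) (V : finType) (e : rel V) (w : {set V} -> R)
    (u v : V) : R :=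
  (dist_s e u v)%:R + pi_w e w u v.

Definition is_metric (R : realType) (V : Type) (d : V -> V -> R) : Prop :=
  (forall x y, 0 <= d x y) /\
  (forall x y, d x y = 0 <-> x = y) /\
  (forall x y, d x y = d y x) /\
  (forall x y z, d x z <= d x y + d y z).

Definition refines (R : realType) (V : Type) (f f' : V -> V -> R) : Prop :=
  forall x1 x2 x1' x2' : V, (x1 = x1' \/ x2 = x2') ->
    f x1 x2 < f x1' x2' -> f' x1 x2 < f' x1' x2'.

(* Main.v *)
Require Import Defs.
From HB Require Import structures.
From mathcomp Require Import all_boot all_order all_algebra.
From mathcomp Require Import reals.
From mathcomp Require Import ring lra.
Import Order.TTheory GRing.Theory Num.Theory.
Local Open Scope ring_scope.

Section G.
Variables (V : finType) (e : rel V).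
Hypothesis esym : symmetric e.
Hypothesis econn : connected_graph e.

Lemma walk_tupleP n u v :
  reflect (exists p : seq V, size p = n /\ walkb e u v p)
          [exists p : n.-tuple V, walkb e u v p].
Proof.
apply: (iffP existsP) => [[p Hp]|[p [Hs Hp]]].
  by exists (val p); rewrite size_tuple.
subst n; by exists (in_tuple p).
Qed.

Lemma short_walk u v : exists p, (size p < #|V|)%N /\ walkb e u v p.
Proof.
have /connectP [p Hp ->] := econn u v.
case: (shortenP Hp) => p' Hp' Hu _.
exists p'; split; last by rewrite /walkb Hp' eqxx.
move/card_uniqP: Hu => /= Hc.
by have := max_card (mem (u :: p')); rewrite Hc.
Qed.

Lemma dist_lt u v : (dist_s e u v < #|V|)%N.
Proof.
have [p [Hs Hw]] := short_walk u v.
rewrite /dist_s -[X in (_ < X)%N](size_iota 0 #|V|) -has_find.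
apply/hasP; exists (size p); first by rewrite mem_iota.
by apply/walk_tupleP; exists p.
Qed.

Lemma dist_walk u v : exists p, size p = dist_s e u v /\ walkb e u v p.
Proof.
apply/walk_tupleP.
have := dist_lt u v; rewrite /dist_s.
set P := (fun n => _).
move=> H.
have := H; rewrite -[X in (_ < X)%N](size_iota 0 #|V|) -has_find => Hh.
have := nth_find 0 Hh; rewrite nth_iota //; by rewrite size_iota in H.
Qed.

Lemma dist_le u v p : walkb e u v p -> (dist_s e u v <= size p)%N.
Proof.
move=> Hw; rewrite leqNgt; apply/negP => Hlt.
have Hlt2 : (size p < #|V|)%N by apply: ltn_trans Hlt (dist_lt u v).
have := before_find 0 Hlt; rewrite nth_iota; last by apply: ltn_trans Hlt (dist_lt u v).
rewrite add0n => /= H.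
have : [exists q : (size p).-tuple V, walkb e u v q] by apply/walk_tupleP; exists p.
by rewrite H.
Qed.

Lemma walk_rev u v p : walkb e u v p -> walkb e v u (rev (belast u p)).
Proof.
case/andP=> Hp /eqP <-; apply/andP; split.
  by rewrite rev_path; apply: sub_path Hp => x y; rewrite esym.
case: p Hp => [|y p] //= _; rewrite rev_cons last_rcons //.
Qed.

Lemma size_rev_belast u (p : seq V) : size (rev (belast u p)) = size p.
Proof. by rewrite size_rev size_belast. Qed.

Lemma walk_cat u v x p q : walkb e u v p -> walkb e v x q -> walkb e u x (p ++ q).
Proof.
case/andP=> Hp /eqP Hl; case/andP=> Hq /eqP Hl2.
by rewrite /walkb cat_path last_cat Hl Hp Hq Hl2 eqxx.
Qed.

Lemma dist_refl u : dist_s e u u = 0%N.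
Proof. by apply/eqP; rewrite -leqn0 (@dist_le u u [::]) // /walkb /= eqxx. Qed.

Lemma dist0 u v : dist_s e u v = 0%N -> u = v.
Proof.
move=> H0; have [p [Hs /andP [_ /eqP <-]]] := dist_walk u v.
by move: Hs; rewrite H0 => /size0nil ->.
Qed.

Lemma dist_sym u v : dist_s e u v = dist_s e v u.
Proof.
have H : forall a b, (dist_s e a b <= dist_s e b a)%N.
  move=> a b; have [p [Hs Hw]] := dist_walk b a.
  by rewrite -Hs -(size_rev_belast b); apply: dist_le; apply: walk_rev.
by apply/eqP; rewrite eqn_leq !H.
Qed.

Lemma dist_tri u v x : (dist_s e u x <= dist_s e u v + dist_s e v x)%N.
Proof.
have [p [Hs Hw]] := dist_walk u v; have [q [Hs2 Hw2]] := dist_walk v x.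
by rewrite -Hs -Hs2 -size_cat; apply: dist_le; apply: walk_cat Hw Hw2.
Qed.
End G.

Section P.
Variables (R : realType) (V : finType) (e : rel V) (w : {set V} -> R).
Hypothesis esym : symmetric e.
Hypothesis econn : connected_graph e.
Hypothesis wpos : forall u v : V, e u v -> 0 <= w [set u; v].

Lemma pathprod_cons u y p : pathprod w u (y :: p) = w [set u; y] * pathprod w y p.
Proof. by rewrite /pathprod /= big_cons. Qed.

Lemma pathprod_nil u : pathprod w u [::] = 1.
Proof. by rewrite /pathprod /= big_nil. Qed.

Lemma pathprod_cat u p q :
  pathprod w u (p ++ q) = pathprod w u p * pathprod w (last u p) q.
Proof.
elim: p u => [|y p IH] u /=; first by rewrite pathprod_nil mul1r.
by rewrite !pathprod_cons IH mulrA.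
Qed.

Lemma last_rev_belast (y : V) p : last (last y p) (rev (belast y p)) = y.
Proof. by case: p => [|z p] //=; rewrite rev_cons last_rcons. Qed.

Lemma pathprod_rev u p :
  pathprod w (last u p) (rev (belast u p)) = pathprod w u p.
Proof.
elim: p u => [|y p IH] u //=.
rewrite rev_cons -cats1 pathprod_cat IH last_rev_belast pathprod_cons.
by rewrite pathprod_cons pathprod_nil mulr1 mulrC setUC.
Qed.

Lemma pathprod_ge0 u p : path e u p -> 0 <= pathprod w u p.
Proof.
elim: p u => [|y p IH] u /=; first by rewrite pathprod_nil.
case/andP=> Hu Hp; rewrite pathprod_cons; apply: mulr_ge0; [exact: wpos| exact: IH].
Qed.

Definition Fq (t : R) := t / (t + 1).

Lemma Fq_ge0 t : 0 <= t -> 0 <= Fq t.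
Proof. by move=> h; rewrite /Fq divr_ge0 // addr_ge0. Qed.

Lemma Fq_lt1 t : 0 <= t -> Fq t < 1.
Proof.
move=> h; rewrite /Fq ltr_pdivrMr ?mul1r; last by rewrite ltr_wpDl.
by rewrite ltrDl.
Qed.

Lemma Fq_sub a b : 0 <= a -> 0 <= b -> Fq (a * b) <= Fq a + Fq b.
Proof.
move=> ha hb; rewrite /Fq -subr_ge0.
have h1 : a + 1 != 0 by rewrite gt_eqF // ltr_wpDl.
have h2 : b + 1 != 0 by rewrite gt_eqF // ltr_wpDl.
have h3 : a * b + 1 != 0 by rewrite gt_eqF // ltr_wpDl // mulr_ge0.
have -> : a / (a + 1) + b / (b + 1) - a * b / (a * b + 1) =
   (a * a * b * b + a * b + a + b) / ((a + 1) * (b + 1) * (a * b + 1)).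
  by field; rewrite h1 h2 h3.
apply: divr_ge0.
  by rewrite !addr_ge0 // !mulr_ge0.
by rewrite !mulr_ge0 // addr_ge0 // mulr_ge0.
Qed.

Lemma pi_le u v p : u != v -> walkb e u v p -> size p = dist_s e u v ->
  pi_w e w u v <= Fq (pathprod w u p).
Proof.
move=> /negbTE Huv Hw Hs; rewrite /pi_w Huv.
have Ht : size p == dist_s e u v by rewrite Hs.
exact: (@bigmin_le_cond _ _ _ _ (Tuple Ht) (fun q : (dist_s e u v).-tuple V => walkb e u v q)
   (fun q : (dist_s e u v).-tuple V => pathprod w u q / (pathprod w u q + 1))).
Qed.

Lemma pi_eq u v : u != v -> exists p, [/\ walkb e u v p, size p = dist_s e u v &
  pi_w e w u v = Fq (pathprod w u p)].
Proof.
move=> /negbTE Huv; rewrite /pi_w Huv.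
have [p [Hs Hw]] := @dist_walk _ _ econn u v.
have /eqP Ht := Hs.
have [q Hq ->] := @eq_bigmin _ _ _ _ (Tuple Ht)
   (fun q : (dist_s e u v).-tuple V => walkb e u v q)
   (fun q : (dist_s e u v).-tuple V => pathprod w u q / (pathprod w u q + 1)) Hw
   (fun i Hi => ltW (Fq_lt1 _ (pathprod_ge0 _ _ (proj1 (andP Hi))))).
by exists (val q); split => //; rewrite size_tuple.
Qed.

Lemma pi_bounds u v : 0 <= pi_w e w u v /\ pi_w e w u v < 1.
Proof.
case: (eqVneq u v) => [->|Huv]; first by rewrite /pi_w eqxx lexx ltr01.
have [p [Hw Hs ->]] := pi_eq _ _ Huv.
have H0 := pathprod_ge0 _ _ (proj1 (andP Hw)).
by split; [apply: Fq_ge0 | apply: Fq_lt1].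
Qed.
End P.

Lemma pi_sym (R : realType) (V : finType) (e : rel V) (w : {set V} -> R) :
  symmetric e -> connected_graph e -> (forall u v : V, e u v -> 0 <= w [set u; v]) ->
  forall u v, pi_w e w u v = pi_w e w v u.
Proof.
move=> es ec wp.
have H : forall a b, pi_w e w a b <= pi_w e w b a.
  move=> a b; case: (eqVneq a b) => [->|Hab]; first by [].
  have Hba : b != a by rewrite eq_sym.
  have [q [Hw Hs ->]] := pi_eq _ _ _ _ ec wp _ _ Hba.
  have Hw' := walk_rev _ _ es _ _ _ Hw.
  have := @pi_le R _ _ w _ _ _ Hab Hw'; rewrite size_rev_belast Hs dist_sym // => /(_ erefl).
  by case/andP: Hw => _ /eqP Hl; rewrite -(pathprod_rev R V w b q) Hl.
by move=> u v; apply/eqP; rewrite eq_le !H.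
Qed.

Theorem proposition5 (R : realType) (V : finType) (e : rel V) (w : {set V} -> R) :
  simple_graph e -> connected_graph e ->
  (forall u v : V, e u v -> 0 <= w [set u; v]) ->
  is_metric (d_pi e w) /\
  refines (fun u v : V => ((dist_s e u v)%:R : R)) (d_pi e w).
Proof.
move=> [es _] ec wp.
have pb := pi_bounds _ _ _ _ ec wp.
have pxx : forall x, pi_w e w x x = 0 by move=> x; rewrite /pi_w eqxx.
have dxx : forall x, d_pi e w x x = 0 by move=> x; rewrite /d_pi (dist_refl _ _ ec) pxx addr0.
have dge0 : forall x y, 0 <= d_pi e w x y.
  by move=> x y; rewrite /d_pi addr_ge0 // (proj1 (pb x y)).
split; last first.
  move=> x1 x2 x1' x2' _; rewrite /d_pi ltr_nat => Hlt.
  have : ((dist_s e x1 x2).+1%:R : R) <= (dist_s e x1' x2')%:R by rewrite ler_nat.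
  rewrite -addn1 natrD.
  have [h1 h2] := pb x1 x2; have [h3 h4] := pb x1' x2'.
  lra.
split => //; split.
  move=> x y; split; last by move=> ->; apply: dxx.
  rewrite /d_pi => H.
  have [h1 h2] := pb x y.
  have h0 : 0 <= ((dist_s e x y)%:R : R) by [].
  have : ((dist_s e x y)%:R : R) = 0 by lra.
  by move/eqP; rewrite pnatr_eq0 => /eqP /(dist0 _ _ ec); apply.
split.
  by move=> x y; rewrite /d_pi (dist_sym _ _ es ec) (pi_sym R V e w es ec wp).
move=> x y z.
case: (eqVneq x y) => [->|Hxy]; first by rewrite dxx add0r.
case: (eqVneq y z) => [->|Hyz]; first by rewrite dxx addr0.
case: (eqVneq x z) => [->|Hxz]; first by rewrite dxx addr_ge0.
rewrite /d_pi.
have [h1 h2] := pb x z; have [h3 h4] := pb x y; have [h5 h6] := pb y z.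
have := dist_tri _ _ ec x y z; rewrite leq_eqVlt => /orP [/eqP Heq|Hlt].
  have [p [Hp Hps ->]] := pi_eq _ _ _ _ ec wp _ _ Hxy.
  have [q [Hq Hqs ->]] := pi_eq _ _ _ _ ec wp _ _ Hyz.
  have Hpq := walk_cat _ _ _ _ _ _ _ Hp Hq.
  have := @pi_le R _ _ w _ _ _ Hxz Hpq; rewrite size_cat Hps Hqs Heq => /(_ erefl).
  rewrite pathprod_cat; case/andP: (Hp) => Hpp /eqP ->.
  have Hs := Fq_sub _ _ _ (pathprod_ge0 _ _ _ _ wp _ _ Hpp) (pathprod_ge0 _ _ _ _ wp _ _ (proj1 (andP Hq))).
  rewrite natrD => Hpi; lra.
have : ((dist_s e x z).+1%:R : R) <= (dist_s e x y + dist_s e y z)%:R by rewrite ler_nat.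
rewrite -addn1 !natrD; lra.
Qed.
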